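(* Let $W'\subset S_n$ be a reflection subgroup and $u\in S_n$. Then the coset $W'u$ is diamond-closed in $S_n$.
   Context: $S_n$ is the symmetric group with length $\ell$ (w.r.t. simple reflections $s_i=(i\ i{+}1)$), and $T$ its set of transpositions. A reflection subgroup is a subgroup generated by a set of transpositions. The Bruhat graph $\Gamma$ has vertex set $S_n$ and edges $w\to tw$ whenever $t\in T$, $\ell(w)<\ell(tw)$. A diamond is a subgraph of $\Gamma$ with four distinct vertices $x_1,\dots,x_4$ and edges $x_1\to x_2\to x_4$, $x_1\to x_3\to x_4$. A set $X\subset S_n$ is diamond-closed in $S_n$ if whenever $X$ contains three vertices of a diamond it contains the fourth. *)

(* Defs.v *)
From mathcomp Require Import all_boot all_order all_fingroup.
Set Implicit Arguments. Unset Strict Implicit. Unset Printing Implicit Defensive.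
Local Open Scope group_scope.

(* Permutations of 'I_n act as functions; [comp a b] is the composite a∘b,
   i.e. (comp a b) x = a (b x).  (MathComp's product (b * a) applies b first.) *)
Definition comp n (a b : 'S_n) : 'S_n := b * a.

(* Coxeter length w.r.t. simple transpositions = number of inversions. *)
Definition perm_length n (w : 'S_n) : nat :=
  #|[set p : 'I_n * 'I_n | (p.1 < p.2)%N && (w p.2 < w p.1)%N]|.

Definition is_transposition n (t : 'S_n) : bool :=
  [exists i : 'I_n, exists j : 'I_n, (i != j) && (t == tperm i j)].

Definition reflection_subgroup n (W : {group 'S_n}) : Prop :=
  exists A : {set 'S_n}, (forall t, t \in A -> is_transposition t) /\ W :=: <<A>>.

Definition bruhat_edge n (w v : 'S_n) : bool :=
  [exists t : 'S_n, is_transposition t && (v == comp t w)]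
  && (perm_length w < perm_length v)%N.

Definition diamond n (x1 x2 x3 x4 : 'S_n) : bool :=
  uniq [:: x1; x2; x3; x4] &&
  [&& bruhat_edge x1 x2, bruhat_edge x2 x4, bruhat_edge x1 x3 & bruhat_edge x3 x4].

Definition diamond_closed n (X : {set 'S_n}) : Prop :=
  forall x1 x2 x3 x4 : 'S_n, diamond x1 x2 x3 x4 ->
    (3 <= count (fun x => x \in X) [:: x1; x2; x3; x4])%N ->
    all (fun x => x \in X) [:: x1; x2; x3; x4].

Definition right_coset n (W : {set 'S_n}) (u : 'S_n) : {set 'S_n} :=
  [set comp w u | w in W].

(* Main.v *)
Require Import Defs.
From mathcomp Require Import all_boot all_order all_fingroup.
Set Implicit Arguments. Unset Strict Implicit. Unset Printing Implicit Defensive.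
Local Open Scope group_scope.

Section S.
Variable n : nat.
Implicit Types (p q r s a b c d : 'I_n).

Lemma tp_pt c d a b : a != b -> tperm c d b = a -> tperm c d = tperm a b.
Proof.
move=> nab; case: tpermP => [->|->|_ _ eba].
- by move=> <-; rewrite tpermC.
- by move=> <-.
- by rewrite eba eqxx in nab.
Qed.

Lemma in4 t1 t2 t3 t4 p q r s a b c d :
  t1 = tperm p q -> t2 = tperm r s -> t3 = tperm a b -> t4 = tperm c d ->
  a != b -> t1 != t2 -> t1 * t2 = t3 * t4 -> [|| a == p, a == q, a == r | a == s].
Proof.
move=> e1 e2 e3 e4 nab n12 E; apply/negPn/negP; rewrite !negb_or => /and4P[ap aq ar as_].
have := congr1 (fun g : 'S_n => g a) E; rewrite /= !permM e1 e2 e3 e4 tpermL.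
rewrite (tpermD (x:=p)) 1?eq_sym // (tpermD (x:=r)) 1?eq_sym // => /esym h.
have e := tp_pt nab h.
have h2 : t2 = t1.
  apply: (mulgI t1); rewrite E e3 e4 e tperm2 e1 tperm2 //.
by move: n12; rewrite h2 eqxx.
Qed.

Lemma core p q r s c d : p != q -> r != s -> p != r ->
  (forall z, tperm r s (tperm p q z) = tperm c d (tperm p r z)) ->
  [|| q == r, p == s | q == s].
Proof.
move=> npq nrs npr Hf; apply/negPn/negP; rewrite !negb_or => /and3P[qr ps qs].
have := Hf p; rewrite !tpermL (tpermD (x:=r)) 1?eq_sym // => h.
have e := tp_pt qr (esym h).
have := Hf r; rewrite e tpermR (tpermD (x:=q)) 1?eq_sym //.
rewrite (tpermD (x:=p)) // tpermL => hs.
by rewrite hs eqxx in ps.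
Qed.

Lemma fin (W : {group 'S_n}) t1 t2 t3 t4 p q r s c d :
  t1 = tperm p q -> t2 = tperm r s -> t3 = tperm p r -> t4 = tperm c d ->
  p != q -> r != s -> p != r -> t1 * t2 = t3 * t4 ->
  t1 \in W -> t2 \in W -> t3 \in W.
Proof.
move=> e1 e2 e3 e4 npq nrs npr E W1 W2.
have Hf z : tperm r s (tperm p q z) = tperm c d (tperm p r z).
  by rewrite -!permM -e1 -e2 -e3 -e4 E.
case/or3P: (core npq nrs npr Hf) => /eqP h.
- by rewrite e3 -h -e1.
- by rewrite e3 h tpermC -e2.
- have qr : q != r by rewrite h eq_sym.
  have -> : t3 = t2 ^ t1.
    rewrite e3 e2 e1 tpermJ -h tpermR (tpermD npr qr).
    by rewrite tpermC.
  exact: (groupJ W2 W1).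
Qed.

Lemma trE t : is_transposition t -> exists p q, p != q /\ t = tperm p q.
Proof. by case/existsP=> p /existsP[q /andP[npq /eqP e]]; exists p, q. Qed.

Lemma key (W : {group 'S_n}) t1 t2 t3 t4 :
  is_transposition t1 -> is_transposition t2 -> is_transposition t3 -> is_transposition t4 ->
  t1 * t2 = t3 * t4 -> t1 != t2 -> t1 \in W -> t2 \in W -> t3 \in W.
Proof.
move=> /trE[p[q[npq e1]]] /trE[r[s[nrs e2]]] /trE[a[b[nab e3]]] /trE[c[d[ncd e4]]] E n12 W1 W2.
have Ha := in4 e1 e2 e3 e4 nab n12 E.
have e3' : t3 = tperm b a by rewrite e3 tpermC.
have nba : b != a by rewrite eq_sym.
have Hb := in4 e1 e2 e3' e4 nba n12 E.
have nqp : q != p by rewrite eq_sym.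
have nsr : s != r by rewrite eq_sym.
have e1' : t1 = tperm q p by rewrite e1 tpermC.
have e2' : t2 = tperm s r by rewrite e2 tpermC.
case/or4P: Ha => /eqP ea; case/or4P: Hb => /eqP eb; subst a b;
  try (by rewrite eqxx in nab);
  try (by rewrite e3 -e1); try (by rewrite e3' -e1);
  try (by rewrite e3 -e2); try (by rewrite e3' -e2).
all: first [ by apply: (fin e1 e2 e3 e4) | by apply: (fin e1 e2' e3 e4)
  | by apply: (fin e1' e2 e3 e4) | by apply: (fin e1' e2' e3 e4)
  | by apply: (fin e1 e2 e3' e4) | by apply: (fin e1' e2 e3' e4)
  | by apply: (fin e1 e2' e3' e4) | by apply: (fin e1' e2' e3' e4) ].
Qed.
End S.

Lemma edgeE n (x y : 'S_n) : bruhat_edge x y -> exists t, is_transposition t /\ y = x * t.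
Proof. by case/andP => /existsP[t /andP[Ht /eqP e]] _; exists t. Qed.

Lemma tt1 n (t : 'S_n) : is_transposition t -> t * t = 1.
Proof. by case/trE=> p[q[_ ->]]; rewrite tperm2. Qed.

Lemma memX n (W : {group 'S_n}) u x : (x \in right_coset W u) = (u^-1 * x \in W).
Proof.
apply/imsetP/idP => [[w Hw ->]|h]; first by rewrite /Defs.comp mulKg.
exists (u^-1 * x) => //; by rewrite /Defs.comp mulKVg.
Qed.

Theorem lemma4p3 (n : nat) (W : {group 'S_n}) (u : 'S_n) :
  reflection_subgroup W -> diamond_closed (right_coset W u).
Proof.
move=> _ x1 x2 x3 x4 /andP[Hu /and4P[b12 b24 b13 b34]] Hc.
have [t1 [T1 e2]] := edgeE b12.
have [t2 [T2 e4]] := edgeE b24.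
have [t3 [T3 e3]] := edgeE b13.
have [t4 [T4 e4']] := edgeE b34.
move: Hu; rewrite /= !inE !negb_or => /andP[/and3P[n12 n13 n14] /andP[/andP[n23 n24] /andP[n34 _]]].
set X := right_coset W u.
have mv1 x t : x \in X -> x * t \in X -> t \in W.
  rewrite !memX => h1; rewrite mulgA => h2; have := groupM (groupVr h1) h2.
  by rewrite mulKg.
have mv2 x t : x \in X -> t \in W -> x * t \in X.
  by rewrite !memX mulgA; apply: groupM.
have E : t1 * t2 = t3 * t4.
  by apply: (mulgI x1); rewrite !mulgA -e2 -e3 -e4 -e4'.
have d12 : t1 != t2.
  apply/eqP=> h; move: n14; rewrite e4 e2 h -mulgA tt1 ?mulg1 ?eqxx //.
have d34 : t3 != t4.
  apply/eqP=> h; move: n14; rewrite e4' e3 h -mulgA tt1 ?mulg1 ?eqxx //.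
have d31 : t3 != t1.
  by apply/eqP=> h; move: n23; rewrite e2 e3 h eqxx.
have d24 : t2 != t4.
  apply/eqP=> h; have : x2 * t2 = x3 * t4 by rewrite -e4 -e4'.
  by rewrite h => /(mulIg t4) e; move: n23; rewrite e eqxx.
have E2 : t3 * t1 = t4 * t2.
  have -> : t4 = t3 * (t1 * t2) by rewrite E mulgA tt1 ?mul1g.
  by rewrite -!mulgA tt1 ?mulg1.
have E3 : t2 * t4 = t1 * t3.
  have := congr1 (fun g => g^-1) E2; rewrite /= !invMg.
  have iv t : is_transposition t -> t^-1 = t.
    by move=> Ht; apply: (mulgI t); rewrite mulgV tt1.
  by rewrite !iv.
have f4 : x1 \in X -> x2 \in X -> x3 \in X -> x4 \in X.
  move=> h1 h2 h3; rewrite e4'; apply: mv2 => //.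
  apply: (key T3 T1 T4 T2 E2 d31); [apply: (mv1 x1) => //; rewrite -e3 //|].
  by apply: (mv1 x1); rewrite -?e2.
have f3 : x1 \in X -> x2 \in X -> x4 \in X -> x3 \in X.
  move=> h1 h2 h4; rewrite e3; apply: mv2 => //.
  apply: (key T1 T2 T3 T4 E d12); first by apply: (mv1 x1); rewrite -?e2.
  by apply: (mv1 x2); rewrite -?e4.
have f2 : x1 \in X -> x3 \in X -> x4 \in X -> x2 \in X.
  move=> h1 h3 h4; rewrite e2; apply: mv2 => //.
  apply: (key T3 T4 T1 T2 (esym E) d34); first by apply: (mv1 x1); rewrite -?e3.
  by apply: (mv1 x3); rewrite -?e4'.
have f1 : x2 \in X -> x3 \in X -> x4 \in X -> x1 \in X.
  move=> h2 h3 h4.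
  have -> : x1 = x2 * t1 by rewrite e2 -mulgA tt1 ?mulg1.
  apply: mv2 => //.
  apply: (key T2 T4 T1 T3 E3 d24); first by apply: (mv1 x2); rewrite -?e4.
  by apply: (mv1 x3); rewrite -?e4'.
move: Hc => /=.
case h1: (x1 \in X); case h2: (x2 \in X); case h3: (x3 \in X); case h4: (x4 \in X) => //= _.
- by move: (f4 h1 h2 h3); rewrite h4.
- by move: (f3 h1 h2 h4); rewrite h3.
- by move: (f2 h1 h3 h4); rewrite h2.
- by move: (f1 h2 h3 h4); rewrite h1.
Qed.
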